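(* Let $x_1,\dots,x_r\in\mathbb R^s$, $c_1,\dots,c_r\in\{-1,1\}$, $\lambda>0$ and $\mu\in\mathbb R^r$ with $\mu>0$. Consider the primal problem $$\min_{\omega\in\mathbb R^s,\ \omega_0\in\mathbb R}\ \tfrac12\|\omega\|^2+\lambda\sum_{i=1}^r h\big(1-c_i(\langle\omega,x_i\rangle+\omega_0)\big),$$ where $h(t)=1$ if $t>0$ and $h(t)=0$ otherwise, and the dual problem $$\inf_{z\in\mathbb R^r}\ \tfrac12\Big\|\sum_{i=1}^r c_iz_ix_i\Big\|^2-\sum_{i=1}^r z_i+\sum_{i=1}^r\mu_i\mathbf 1_{\{z_i\neq0\}}\quad\text{s.t.}\quad \sum_{i=1}^r c_iz_i=0,\ z\ge0.$$ Then the primal problem always has a global minimizer, and the dual problem has a global minimizer if and only if there exist $\omega\in\mathbb R^s$, $\omega_0\in\mathbb R$ with $c_i(\langle\omega,x_i\rangle+\omega_0)\ge1$ for all $i\in[r]$.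
   Context: $\mathbf 1_{\{z_i\neq0\}}$ equals $1$ if $z_i\ne0$ and $0$ otherwise; $[r]=\{1,\dots,r\}$. *)

(* Defs.v *)
From HB Require Import structures.
From mathcomp Require Import all_boot all_order all_algebra.
From mathcomp Require Import reals.
Set Implicit Arguments. Unset Strict Implicit. Unset Printing Implicit Defensive.
Import Order.TTheory GRing.Theory Num.Theory.
Local Open Scope ring_scope.

Section Defs.
Variable R : realType.

Definition dotv (s : nat) (u v : 'rV[R]_s) : R := \sum_(j < s) u 0 j * v 0 j.
Definition sqnorm (s : nat) (u : 'rV[R]_s) : R := dotv u u.

Definition step01 (t : R) : R := if 0 < t then 1 else 0.

Definition ind_nz (t : R) : R := if t != 0 then 1 else 0.

Definition primal_obj (r s : nat) (x : 'I_r -> 'rV[R]_s) (c : 'I_r -> R)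
  (lam : R) (w : 'rV[R]_s) (w0 : R) : R :=
  2^-1 * sqnorm w + lam * \sum_(i < r) step01 (1 - c i * (dotv w (x i) + w0)).

Definition dual_obj (r s : nat) (x : 'I_r -> 'rV[R]_s) (c : 'I_r -> R)
  (mu : 'I_r -> R) (z : 'I_r -> R) : R :=
  2^-1 * sqnorm (\sum_(i < r) (c i * z i) *: x i) - \sum_(i < r) z i
  + \sum_(i < r) mu i * ind_nz (z i).

Definition dual_feasible (r : nat) (c : 'I_r -> R) (z : 'I_r -> R) : Prop :=
  \sum_(i < r) c i * z i = 0 /\ (forall i, 0 <= z i).

End Defs.

(* Main.v *)
Require Import Defs.
From HB Require Import structures.
From mathcomp Require Import all_boot all_order all_algebra.
From mathcomp Require Import reals.
From mathcomp Require Import all_classical all_reals all_analysis.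
From mathcomp Require Import ring lra.
Import Order.TTheory GRing.Theory Num.Theory.
Import numFieldTopology.Exports.
Set Implicit Arguments. Unset Printing Implicit Defensive.
Local Open Scope classical_set_scope.
Local Open Scope ring_scope.

Section Helpers.
Context {R : realType}.
Lemma exists_min n (f : 'rV[R]_n -> R) (A : set 'rV[R]_n) (M : R) v0 :
  A v0 -> closed A -> (forall v, A v -> forall j, `|v ord0 j| <= M) ->
  continuous f -> exists2 c, A c & forall t, A t -> f c <= f t.
Proof.
move=> Av0 Acl Ab fc.
have cA : compact A.
  apply: bounded_closed_compact => //.
  exists `|M|; split; first exact: num_real.
  move=> M' MM' v Av /=.
  rewrite [leLHS]/Num.norm /= mx_normrE; apply: bigmax_le.
    by apply: ltW; apply: le_lt_trans MM'.
  move=> [i j] _ /=; rewrite (ord1 i); apply: ltW.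
  exact: le_lt_trans (le_trans (Ab _ Av j) (ler_norm M)) MM'.
have [c cA' cmin] := @EVT_min_rV R n f A (ex_intro _ v0 Av0) cA (continuous_subspaceT fc).
by exists c; [rewrite inE in cA'|move=> t At; apply: cmin; rewrite inE].
Qed.
Lemma fin_argmin (I : finType) (P : pred I) (f : I -> R) i0 :
  P i0 -> exists2 i, P i & forall j, P j -> f i <= f j.
Proof.
move=> Pi0; case: (@arg_minP _ R I i0 P f Pi0) => i Pi H.
by exists i.
Qed.

Lemma fin_argmax (I : finType) (P : pred I) (f : I -> R) i0 :
  P i0 -> exists2 i, P i & forall j, P j -> f j <= f i.
Proof.
move=> Pi0; have [i Pi H] := @fin_argmin I P (fun i => - f i) i0 Pi0.
by exists i => // j /H; rewrite lerN2.
Qed.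

Lemma interval_lemma (I : finType) (L U : pred I) (a b : I -> R) :
  (forall i j, L i -> U j -> a i <= b j) ->
  exists t, (forall i, L i -> a i <= t) /\ (forall j, U j -> t <= b j).
Proof.
move=> H.
case: (pickP L) => [i0 Li0|L0].
  have [i Li Hi] := @fin_argmax I L a i0 Li0.
  by exists (a i); split => // j Uj; apply: H.
case: (pickP U) => [j0 Uj0|U0].
  have [j Uj Hj] := @fin_argmin I U b j0 Uj0.
  by exists (b j); split => // i; rewrite L0.
by exists 0; split => i; rewrite ?L0 ?U0.
Qed.

Section Top.
Variable T : topologicalType.

Lemma cont_sum m (F : 'I_m -> T -> R) :
  (forall i, continuous (F i)) -> continuous (fun v => \sum_(i < m) F i v).
Proof.
elim: m F => [|m IH] F Fc.
  have -> : (fun v => \sum_(i < 0) F i v) = fun=> 0.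
    by apply: funext => v; rewrite big_ord0.
  exact: cst_continuous.
have -> : (fun v => \sum_(i < m.+1) F i v) =
   (fun v => \sum_(i < m) F (widen_ord (leqnSn m) i) v + F ord_max v).
  by apply: funext => v; rewrite big_ord_recr.
move=> x; apply: continuousD; last exact: Fc.
exact: (IH (fun i => F (widen_ord (leqnSn m) i))).
Qed.

Lemma cont_mul (f g : T -> R) : continuous f -> continuous g ->
  continuous (fun v => f v * g v).
Proof. by move=> fc gc x; exact: (continuousM (fc x) (gc x)). Qed.

Lemma cont_add (f g : T -> R) : continuous f -> continuous g ->
  continuous (fun v => f v + g v).
Proof. by move=> fc gc x; exact: (continuousD (fc x) (gc x)). Qed.

Lemma cont_opp (f : T -> R) : continuous f -> continuous (fun v => - f v).
Proof. by move=> fc x; exact: (continuousN (fc x)). Qed.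

Lemma cont_cst (k : R) : continuous (fun _ : T => k).
Proof. exact: cst_continuous. Qed.

Lemma closed_ge0 (f : T -> R) : continuous f -> closed [set v | 0 <= f v].
Proof. by move=> fc; apply: (@preimage_closed _ _ f [set x | 0 <= x]) => // ? _; exact: fc. Qed.

Lemma closed_eq0 (f : T -> R) : continuous f -> closed [set v | f v = 0].
Proof. by move=> fc; apply: (@preimage_closed _ _ f [set x | x = 0]) => // ? _; exact: fc. Qed.

Lemma closed_forall (I : Type) (A : I -> set T) : (forall i, closed (A i)) ->
  closed [set v | forall i, A i v].
Proof.
move=> Ac.
have -> : [set v | forall i, A i v] = \bigcap_(i in setT) A i.
  by apply/seteqP; split => v /= H i //; apply: H.
by apply: closed_bigI => i _.
Qed.

Lemma closed_and (A B : set T) : closed A -> closed B -> closed [set v | A v /\ B v].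
Proof. exact: closedI. Qed.

End Top.

Lemma cont_coord n j : continuous (fun v : 'rV[R]_n => v ord0 j).
Proof. exact: coord_continuous. Qed.

Implicit Types (n : nat).
Lemma dotvC n (u v : 'rV[R]_n) : dotv u v = dotv v u.
Proof. by rewrite /dotv; apply: eq_bigr => j _; rewrite mulrC. Qed.

Lemma dotvDl n (u v w : 'rV[R]_n) : dotv (u + v) w = dotv u w + dotv v w.
Proof. by rewrite /dotv -big_split; apply: eq_bigr => j _; rewrite mxE mulrDl. Qed.

Lemma dotvZl n a (u w : 'rV[R]_n) : dotv (a *: u) w = a * dotv u w.
Proof. by rewrite /dotv mulr_sumr; apply: eq_bigr => j _; rewrite mxE mulrA. Qed.

Lemma dotvDr n (u v w : 'rV[R]_n) : dotv w (u + v) = dotv w u + dotv w v.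
Proof. by rewrite dotvC dotvDl !(dotvC w). Qed.

Lemma dotvZr n a (u w : 'rV[R]_n) : dotv w (a *: u) = a * dotv w u.
Proof. by rewrite dotvC dotvZl dotvC. Qed.

Lemma dotv_sumr n m (F : 'I_m -> 'rV[R]_n) w :
  dotv w (\sum_(i < m) F i) = \sum_(i < m) dotv w (F i).
Proof.
elim: m F => [|m IH] F; first by rewrite !big_ord0 /dotv big1 // => j _; rewrite mxE mulr0.
by rewrite !big_ord_recr /= dotvDr IH.
Qed.

Lemma sqnorm_ge0 n (u : 'rV[R]_n) : 0 <= sqnorm u.
Proof. by rewrite /sqnorm /dotv; apply: sumr_ge0 => j _; rewrite -expr2 sqr_ge0. Qed.

Lemma coord_sq_le n (u : 'rV[R]_n) j : u ord0 j ^+ 2 <= sqnorm u.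
Proof.
rewrite /sqnorm /dotv (bigD1 j) //= -expr2 lerDl.
by apply: sumr_ge0 => k _; rewrite -expr2 sqr_ge0.
Qed.

Lemma sqnorm_eq0 n (u : 'rV[R]_n) : sqnorm u = 0 -> u = 0.
Proof.
move=> H; apply/rowP => j; rewrite mxE.
have := coord_sq_le u j; rewrite H => Hj.
by apply/eqP; rewrite -sqrf_eq0 eq_le Hj sqr_ge0.
Qed.

Lemma sqnorm_comb n a b (u y : 'rV[R]_n) :
  sqnorm (a *: u + b *: y) = a ^+ 2 * sqnorm u + 2 * a * b * dotv u y + b ^+ 2 * sqnorm y.
Proof.
rewrite /sqnorm !dotvDl !dotvDr !dotvZl !dotvZr (dotvC y u).
by rewrite /GRing.exp /=; ring.
Qed.

Lemma sqnormB n (u y : 'rV[R]_n) :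
  sqnorm (u - y) = sqnorm u - 2 * dotv u y + sqnorm y.
Proof.
have -> : u - y = 1 *: u + (-1) *: y by rewrite !scaleN1r scale1r.
by rewrite sqnorm_comb; ring.
Qed.

Lemma comb_coord n m (k : 'I_m -> R) (x : 'I_m -> 'rV[R]_n) j :
  (\sum_(i < m) k i *: x i) ord0 j = \sum_(i < m) k i * x i ord0 j.
Proof. by rewrite summxE; apply: eq_bigr => i _; rewrite mxE. Qed.

Lemma cont_dotv n (y : 'rV[R]_n) : continuous (fun w : 'rV[R]_n => dotv w y).
Proof.
rewrite /dotv; apply: cont_sum => j; apply: cont_mul; [exact: cont_coord|exact: cont_cst].
Qed.

Lemma cont_sqnorm (T : topologicalType) n (f : T -> 'rV[R]_n) :
  (forall j, continuous (fun v => f v ord0 j)) -> continuous (fun v => sqnorm (f v)).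
Proof. by move=> fc; rewrite /sqnorm /dotv; apply: cont_sum => j; apply: cont_mul. Qed.

Lemma cont_lin m (k : 'I_m -> R) :
  continuous (fun v : 'rV[R]_m => \sum_(i < m) k i * v ord0 i).
Proof. by apply: cont_sum => i; apply: cont_mul; [exact: cont_cst|exact: cont_coord]. Qed.

Lemma cont_comb m n (k : 'I_m -> R) (x : 'I_m -> 'rV[R]_n) :
  continuous (fun v : 'rV[R]_m => sqnorm (\sum_(i < m) (k i * v ord0 i) *: x i)).
Proof.
apply: cont_sqnorm => j.
have -> : (fun v : 'rV[R]_m => (\sum_(i < m) (k i * v ord0 i) *: x i) ord0 j) =
  (fun v => \sum_(i < m) (k i * x i ord0 j) * v ord0 i).
  by apply: funext => v; rewrite comb_coord; apply: eq_bigr => i _; rewrite mulrAC.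
exact: cont_lin.
Qed.

Lemma le_sum_nonneg m (d : 'I_m -> R) j : (forall i, 0 <= d i) -> d j <= \sum_(i < m) d i.
Proof.
move=> H; rewrite (bigD1 j) //= lerDl; exact: sumr_ge0.
Qed.

Lemma cont_sumv m : continuous (fun v : 'rV[R]_m => \sum_(i < m) v ord0 i).
Proof. by apply: cont_sum => i; exact: cont_coord. Qed.

End Helpers.

Section PartC.
Variables (R : realType) (r s : nat) (x : 'I_r -> 'rV[R]_s) (c : 'I_r -> R) (mu : 'I_r -> R).

Definition Vz (z : 'I_r -> R) : 'rV[R]_s := \sum_(i < r) (c i * z i) *: x i.
Definition Gz (z : 'I_r -> R) : R := 2^-1 * sqnorm (Vz z) - \sum_(i < r) z i.

Lemma dual_objE z : dual_obj x c mu z = Gz z + \sum_(i < r) mu i * ind_nz (z i).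
Proof. by []. Qed.

Lemma ind_nz_ge0 (t : R) : 0 <= ind_nz t.
Proof. by rewrite /ind_nz; case: ifP. Qed.

Lemma ind_nz_le1 (t : R) : ind_nz t <= 1.
Proof. by rewrite /ind_nz; case: ifP. Qed.

Lemma dual_bound (hmu : forall i, 0 < mu i) (w : 'rV[R]_s) (w0 : R) :
  (forall i, 1 <= c i * (dotv w (x i) + w0)) ->
  forall z, dual_feasible c z -> dual_obj x c mu z <= 0 ->
  \sum_(i < r) z i <= 2 * sqnorm w.
Proof.
move=> hw z [hc0 hz] hobj.
set V := Vz z.
have h1 : \sum_(i < r) z i <= dotv w V.
  rewrite /V /Vz dotv_sumr.
  have -> : \sum_(i < r) dotv w ((c i * z i) *: x i) =
     \sum_(i < r) z i * (c i * (dotv w (x i) + w0)) - w0 * \sum_(i < r) c i * z i.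
    rewrite mulr_sumr -sumrB; apply: eq_bigr => i _; rewrite dotvZr; ring.
  rewrite hc0 mulr0 subr0; apply: ler_sum => i _.
  by rewrite -{1}(mulr1 (z i)); apply: ler_wpM2l.
have h2 : Gz z <= 0.
  apply: le_trans hobj; rewrite dual_objE lerDl; apply: sumr_ge0 => i _.
  by apply: mulr_ge0; [exact: ltW|exact: ind_nz_ge0].
have h3 := sqnorm_ge0 (2^-1 *: V + (-1) *: w : 'rV[R]_s).
rewrite sqnorm_comb in h3.
move: h2; rewrite /Gz -/V => h2.
have Wge := sqnorm_ge0 w.
rewrite (dotvC V w) in h3.
move: h1 h2 h3; set a := sqnorm V; set b := dotv w V; set W := sqnorm w; set S := \sum_(i < r) z i.
move=> h1 h2 h3.
have e : (2^-1 : R) ^+ 2 = 4^-1 by rewrite expr2 -invfM; congr (_^-1); rewrite -natrM.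
rewrite e in h3.
lra.
Qed.

Definition zf n (v : 'rV[R]_n) : 'I_n -> R := fun i => v ord0 i.

Lemma cont_Gz : continuous (fun v : 'rV[R]_r => Gz (zf v)).
Proof.
rewrite /Gz /Vz /zf.
apply: cont_add; last apply: cont_opp.
  apply: cont_mul; first exact: cont_cst.
  exact: (cont_comb c x).
exact: cont_sumv.
Qed.

Lemma Gz0 : Gz (fun _ => 0) = 0.
Proof.
rewrite /Gz /Vz big1 ?big1 //.
  by rewrite /sqnorm /dotv big1 ?mulr0 ?subr0 // => j _; rewrite mxE mulr0.
by move=> i _; rewrite mulr0 scale0r.
Qed.

Lemma dual_exists (hmu : forall i, 0 < mu i) (w : 'rV[R]_s) (w0 : R) :
  (forall i, 1 <= c i * (dotv w (x i) + w0)) ->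
  exists z, dual_feasible c z /\ forall z', dual_feasible c z' ->
     dual_obj x c mu z <= dual_obj x c mu z'.
Proof.
move=> hw.
set W := sqnorm w.
pose A (T : {set 'I_r}) := [set v : 'rV[R]_r | (forall i, 0 <= v ord0 i) /\
   (\sum_(i < r) c i * v ord0 i = 0) /\ (forall i, (i \notin T)%:R * v ord0 i = 0) /\
   0 <= 2 * W - \sum_(i < r) v ord0 i].
have hmin : forall T, exists m, A T m /\ forall t, A T t -> Gz (zf m) <= Gz (zf t).
  move=> T.
  have A0 : A T 0.
    split; first by move=> i; rewrite mxE.
    split; first by rewrite big1 // => i _; rewrite mxE mulr0.
    split; first by move=> i; rewrite mxE mulr0.
    rewrite big1 ?subr0; last by move=> i _; rewrite mxE.
    by apply: mulr_ge0 => //; exact: sqnorm_ge0.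
  have Acl : closed (A T).
    apply: closed_and; first by apply: closed_forall => i; apply: closed_ge0; exact: cont_coord.
    apply: closed_and; first by apply: closed_eq0; exact: cont_lin.
    apply: closed_and.
      apply: closed_forall => i; apply: closed_eq0.
      by apply: cont_mul; [exact: cont_cst|exact: cont_coord].
    apply: closed_ge0; apply: cont_add; first exact: cont_cst.
    apply: cont_opp; exact: cont_sumv.
  have Ab : forall v, A T v -> forall j, `|v ord0 j| <= 2 * W.
    move=> v [h0 [_ [_ hb]]] j.
    rewrite ger0_norm //; apply: le_trans (@le_sum_nonneg R r (fun i => v ord0 i) j h0) _; lra.
  have [m Am mmin] := @exists_min R r (fun v => Gz (zf v)) (A T) (2 * W) 0 A0 Acl Ab cont_Gz.
  by exists m.
have [m hm] := choice hmin.
pose val (T : {set 'I_r}) := Gz (zf (m T)) + \sum_(i in T) mu i.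
have [Ts _ hTs] := @fin_argmin R _ predT val finset.set0 isT.
have hmu0 : forall i, 0 <= mu i by move=> i; exact: ltW.
have [[hA0 [hA1 [hA2 hA3]]] hmT] := hm Ts.
exists (zf (m Ts)); split; first by split.
have hobj : dual_obj x c mu (zf (m Ts)) <= val Ts.
  rewrite dual_objE /val lerD2l [X in _ <= X]big_mkcond /=; apply: ler_sum => i _.
  case: ifP => iT.
    by rewrite -{2}(mulr1 (mu i)); apply: ler_wpM2l => //; exact: ind_nz_le1.
  have := hA2 i; rewrite iT mul1r /zf => ->.
  by rewrite /ind_nz eqxx mulr0.
move=> z' [hz1 hz2].
have [hsmall|hbig] := leP (\sum_(i < r) z' i) (2 * W).
  pose T' : {set 'I_r} := [set i | z' i != 0]%SET.
  pose v' : 'rV[R]_r := \row_i z' i.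
  have zv : zf v' = z' by apply: funext => i; rewrite /zf mxE.
  have Av' : A T' v'.
    split; first by move=> i; rewrite mxE.
    split; first by rewrite -[RHS]hz1; apply: eq_bigr => i _; rewrite mxE.
    split.
      move=> i; rewrite mxE inE negbK.
      by case: eqP => [->|]; rewrite ?mulr0 ?mul0r.
    rewrite subr_ge0; apply: le_trans hsmall; rewrite le_eqVlt; apply/orP; left; apply/eqP.
    by apply: eq_bigr => i _; rewrite mxE.
  apply: (le_trans hobj); apply: (le_trans (hTs T' isT)).
  rewrite /val dual_objE; apply: lerD.
    by have := (hm T').2 v' Av'; rewrite zv.
  rewrite [X in X <= _]big_mkcond /=; apply: ler_sum => i _; rewrite inE /ind_nz.
  by case: ifP => _; rewrite ?mulr1 ?mulr0.
apply: (le_trans hobj); apply: (le_trans (hTs finset.set0 isT)).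
have h0 : val finset.set0 <= 0.
  rewrite /val big_set0 addr0.
  have A0 : A finset.set0 0.
    split; first by move=> i; rewrite mxE.
    split; first by rewrite big1 // => i _; rewrite mxE mulr0.
    split; first by move=> i; rewrite mxE mulr0.
    rewrite big1 ?subr0; last by move=> i _; rewrite mxE.
    by apply: mulr_ge0 => //; exact: sqnorm_ge0.
  apply: le_trans ((hm finset.set0).2 0 A0) _.
  have -> : zf (0 : 'rV[R]_r) = (fun _ => 0) by apply: funext => i; rewrite /zf mxE.
  by rewrite Gz0.
apply: (le_trans h0); rewrite leNgt; apply/negP => hneg.
have := dual_bound hmu w w0 hw (conj hz1 hz2) (ltW hneg).
by rewrite leNgt hbig.
Qed.
End PartC.
Arguments zf {R n}.

Section PartB.
Variables (R : realType) (r s : nat) (x : 'I_r -> 'rV[R]_s) (c : 'I_r -> R).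

Notation V := (@Vz R r s x c).

Lemma Vz_lin (d e : 'I_r -> R) (a b : R) :
  V (fun i => a * d i + b * e i) = a *: V d + b *: V e.
Proof.
rewrite /Vz !scaler_sumr -big_split; apply: eq_bigr => i _ /=.
by rewrite !scalerA -scalerDl; congr (_ *: _); ring.
Qed.

Lemma Vz_delta j : V (fun i => (i == j)%:R) = c j *: x j.
Proof.
rewrite /Vz (bigD1 j) //= big1 ?eqxx ?mulr1 ?addr0 //.
by move=> i /negbTE ->; rewrite mulr0 scale0r.
Qed.

Lemma sum_lin (k d e : 'I_r -> R) (a b : R) :
  \sum_(i < r) k i * (a * d i + b * e i) =
  a * \sum_(i < r) k i * d i + b * \sum_(i < r) k i * e i.
Proof.
rewrite !mulr_sumr -big_split; apply: eq_bigr => i _ /=; ring.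
Qed.

Lemma sum_delta (k : 'I_r -> R) j : \sum_(i < r) k i * (i == j)%:R = k j.
Proof.
rewrite (bigD1 j) //= big1 ?eqxx ?mulr1 ?addr0 //.
by move=> i /negbTE ->; rewrite mulr0.
Qed.

Lemma sum_delta1 j : \sum_(i < r) ((i == j)%:R : R) = 1.
Proof.
rewrite (bigD1 j) //= big1 ?eqxx ?addr0 //.
by move=> i /negbTE ->.
Qed.

Lemma gordan :
  (forall d : 'I_r -> R, (forall i, 0 <= d i) -> \sum_(i < r) d i = 1 ->
     \sum_(i < r) c i * d i = 0 -> V d = 0 -> False) ->
  exists (w : 'rV[R]_s) (w0 : R), forall i, 1 <= c i * (dotv w (x i) + w0).
Proof.
move=> hG.
case: (pickP (fun _ : 'I_r => true)) => [i0 _|hnone]; last first.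
  by exists 0, 0 => i; have := hnone i.
pose A := [set v : 'rV[R]_r | (forall i, 0 <= v ord0 i) /\ \sum_(i < r) v ord0 i - 1 = 0].
pose Tf (v : 'rV[R]_r) := \sum_(i < r) c i * v ord0 i.
pose h (v : 'rV[R]_r) := sqnorm (V (zf v)) + Tf v * Tf v.
have hc : continuous h.
  rewrite /h /Vz /zf /Tf; apply: cont_add; first exact: (cont_comb c x).
  by apply: cont_mul; exact: cont_lin.
pose v0 : 'rV[R]_r := \row_i (i == i0)%:R.
have Av0 : A v0.
  split; first by move=> i; rewrite mxE ler0n.
  apply/eqP; rewrite subr_eq0; apply/eqP; rewrite -(sum_delta1 i0).
  by apply: eq_bigr => i _; rewrite mxE.
have Acl : closed A.
  apply: closed_and; first by apply: closed_forall => i; apply: closed_ge0; exact: cont_coord.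
  apply: closed_eq0; apply: cont_add; [exact: cont_sumv|exact: cont_cst].
have Ab : forall v, A v -> forall j, `|v ord0 j| <= 1.
  move=> v [h0 h1] j; rewrite ger0_norm //.
  have := @le_sum_nonneg R r (fun i => v ord0 i) j h0; lra.
have [p Ap pmin] := @exists_min R r h A 1 v0 Av0 Acl Ab hc.
case: Ap => hp0 hp1.
set d := zf p.
set U := V d.
set T := Tf p.
set H := sqnorm U + T * T.
have hp1' : \sum_(i < r) d i = 1 by apply/eqP; rewrite -subr_eq0; apply/eqP.
have hU0 := sqnorm_ge0 U.
have hT0 : 0 <= T * T by rewrite -expr2 sqr_ge0.
have [H0|Hpos] : H = 0 \/ 0 < H.
  by rewrite lt_def; case: eqP => [->|_]; [left|right; rewrite addr_ge0].
  have TT0 : T * T = 0 by move: H0; rewrite /H; lra.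
  have T0 : T = 0 by move: TT0 => /eqP; rewrite mulf_eq0 orbb => /eqP.
  exfalso; apply: (hG d) => //.
  by apply: sqnorm_eq0; move: H0; rewrite /H -/U; lra.
have key : forall j, H <= c j * dotv U (x j) + T * c j.
  move=> j; rewrite leNgt; apply/negP => ha.
  set a := c j * dotv U (x j) + T * c j - H.
  have han : a < 0 by rewrite /a; lra.
  set Q := sqnorm (c j *: x j).
  set q := sqnorm (c j *: x j - U) + (c j - T) * (c j - T).
  have hq : q = Q - 2 * (c j * dotv U (x j)) + sqnorm U + (c j - T) * (c j - T).
    by rewrite /q sqnormB dotvZl (dotvC (x j)).
  have hq0 : 0 <= q by rewrite /q; apply: addr_ge0; [exact: sqnorm_ge0|rewrite -expr2 sqr_ge0].
  have hv : forall t, 0 <= t -> t <= 1 -> 0 <= 2 * t * a + t ^+ 2 * q.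
    move=> t t0 t1.
    pose vt : 'rV[R]_r := \row_i ((1 - t) * d i + t * (i == j)%:R).
    have zvt : zf vt = (fun i => (1 - t) * d i + t * (i == j)%:R).
      by apply: funext => i; rewrite /zf mxE.
    have Avt : A vt.
      split.
        move=> i; rewrite mxE; apply: addr_ge0; apply: mulr_ge0 => //; lra.

      rewrite (eq_bigr (fun i => (1 - t) * d i + t * (i == j)%:R)); last by move=> i _; rewrite mxE.
      rewrite big_split /= -!mulr_sumr sum_delta1.
      rewrite hp1'.
      ring.
    have := pmin vt Avt.
    rewrite /h zvt Vz_lin Vz_delta /Tf.
    have -> : \sum_(i < r) c i * vt ord0 i = (1 - t) * T + t * c j.
      rewrite -sum_delta (eq_bigr (fun i => c i * ((1 - t) * d i + t * (i == j)%:R))).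
        by rewrite sum_lin.
      by move=> i _; rewrite mxE.
    rewrite sqnorm_comb dotvZr -/U -/Q -/T -/(Tf p) -/T.
    rewrite hq /a /H => hle.
    have e : (1 - t) ^+ 2 * sqnorm U + 2 * (1 - t) * t * (c j * dotv U (x j)) + t ^+ 2 * Q +
       ((1 - t) * T + t * c j) * ((1 - t) * T + t * c j) =
       sqnorm U + T * T + (2 * t * (c j * dotv U (x j) + T * c j - (sqnorm U + T * T)) +
       t ^+ 2 * (Q - 2 * (c j * dotv U (x j)) + sqnorm U + (c j - T) * (c j - T))) by ring.
    by move: hle; rewrite e -lerBlDl subrr.
  case: (leP (q + a) 0) => hqa.
    have := hv 1 ler01 (lexx 1); rewrite expr1n; lra.
  have qpos : 0 < q by lra.
  pose t := - a / q.
  have tq : t * q = - a by rewrite /t mulrVK // unitfE gt_eqF.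
  have t0 : 0 < t by rewrite /t divr_gt0 // oppr_gt0.
  have t1 : t <= 1 by rewrite /t ler_pdivrMr // mul1r; lra.
  have := hv t (ltW t0) t1.
  have -> : 2 * t * a + t ^+ 2 * q = t * a.
    have e : 2 * t * a + t ^+ 2 * q = t * (2 * a + t * q) by ring.
    by rewrite e tq; ring.
  by rewrite pmulr_rge0 // leNgt han.
exists (H^-1 *: U), (H^-1 * T) => j.
have -> : c j * (dotv (H^-1 *: U) (x j) + H^-1 * T) = H^-1 * (c j * dotv U (x j) + T * c j).
  by rewrite dotvZl; ring.
have Hn0 : H != 0 by rewrite gt_eqF.
rewrite -(mulVf Hn0); apply: ler_wpM2l; last exact: key.
by rewrite invr_ge0 ltW.
Qed.

Lemma sqnorm0 n : sqnorm (0 : 'rV[R]_n) = 0.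
Proof. by rewrite /sqnorm /dotv big1 // => j _; rewrite mxE mul0r. Qed.

Lemma dual_min_sep (mu : 'I_r -> R) (hmu : forall i, 0 < mu i) :
  (exists z, dual_feasible c z /\ forall z', dual_feasible c z' ->
     dual_obj x c mu z <= dual_obj x c mu z') ->
  exists (w : 'rV[R]_s) (w0 : R), forall i, 1 <= c i * (dotv w (x i) + w0).
Proof.
move=> [z [hz hmin]]; apply: gordan => d hd0 hd1 hdc hdV.
set M := \sum_(i < r) mu i.
set t := `|M - dual_obj x c mu z| + 1.
have t0 : 0 <= t by rewrite /t addr_ge0.
pose z' := fun i => t * d i.
have hz' : dual_feasible c z'.
  split; last by move=> i; rewrite /z' mulr_ge0.
  rewrite (eq_bigr (fun i => t * (c i * d i))); last by move=> i _; rewrite /z' mulrCA.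
  by rewrite -mulr_sumr hdc mulr0.
have := hmin z' hz'.
have hV : V z' = 0.
  rewrite /Vz (eq_bigr (fun i => t *: ((c i * d i) *: x i))); last first.
    by move=> i _; rewrite /z' scalerA mulrCA.
  by rewrite -scaler_sumr -/(V d) hdV scaler0.
rewrite [X in _ <= X]dual_objE /Gz hV sqnorm0 mulr0 sub0r.
have -> : \sum_(i < r) z' i = t by rewrite /z' -mulr_sumr hd1 mulr1.
have hind : \sum_(i < r) mu i * ind_nz (z' i) <= M.
  apply: ler_sum => i _; rewrite -{2}(mulr1 (mu i)); apply: ler_wpM2l.
    exact: ltW.
  exact: ind_nz_le1.
have ht : M - dual_obj x c mu z < t.
  rewrite /t; apply: le_lt_trans (ler_norm _) _; lra.
rewrite dual_objE /Gz in ht *.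
lra.
Qed.

End PartB.

Section PartA.
Variables (R : realType) (r s : nat) (x : 'I_r -> 'rV[R]_s) (c : 'I_r -> R) (lam : R).

Definition feasS (S : {set 'I_r}) (w : 'rV[R]_s) (w0 : R) :=
  forall i, i \in S -> 1 <= c i * (dotv w (x i) + w0).

Definition viol (w : 'rV[R]_s) (w0 : R) :=
  \sum_(i < r) step01 (1 - c i * (dotv w (x i) + w0)).

Lemma step_eq (t : R) : step01 (1 - t) = if 1 <= t then 0 else 1.
Proof. by rewrite /step01 subr_gt0; case: leP. Qed.

Lemma viol_le S w w0 : feasS S w w0 -> viol w w0 <= \sum_(i < r) (i \notin S)%:R.
Proof.
move=> hf; apply: ler_sum => i _; rewrite step_eq.
case: (boolP (i \in S)) => iS /=.
  by rewrite hf.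
by case: ifP.
Qed.

Lemma viol_eq w w0 :
  viol w w0 = \sum_(i < r) (i \notin [set i | 1 <= c i * (dotv w (x i) + w0)]%SET)%:R.
Proof.
by apply: eq_bigr => i _; rewrite step_eq inE; case: ifP.
Qed.

Lemma per_S (hc : forall i, c i = 1 \/ c i = -1) S :
  (exists w w0, feasS S w w0) ->
  exists w w0, feasS S w w0 /\ forall w' w0', feasS S w' w0' -> sqnorm w <= sqnorm w'.
Proof.
move=> [wf [w0f hf]].
set B := sqnorm wf.
pose P (i j : 'I_r) := [&& i \in S, j \in S, c i == 1 & c j == -1].
pose A := [set w : 'rV[R]_s | 0 <= B - sqnorm w /\ forall ij : 'I_r * 'I_r,
   0 <= (P ij.1 ij.2)%:R * (dotv w (x ij.1) - dotv w (x ij.2) - 2)].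
have pairP : forall w w0, feasS S w w0 -> forall ij : 'I_r * 'I_r,
   0 <= (P ij.1 ij.2)%:R * (dotv w (x ij.1) - dotv w (x ij.2) - 2).
  move=> w w0 hw [i j] /=; rewrite /P.
  case: (boolP [&& i \in S, j \in S, c i == 1 & c j == -1]) => [/and4P [iS jS /eqP ci /eqP cj]|_].
    have := hw i iS; have := hw j jS; rewrite ci cj mul1r mul1r; lra.
  by rewrite mul0r.
have Awf : A wf by split; [rewrite subrr|exact: pairP hf].
have Acl : closed A.
  apply: closed_and.
    apply: closed_ge0; apply: cont_add; first exact: cont_cst.
    apply: cont_opp; apply: (@cont_sqnorm R _ s id) => j; exact: cont_coord.
  apply: closed_forall => ij; apply: closed_ge0; apply: cont_mul; first exact: cont_cst.
  apply: cont_add; last exact: cont_cst.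
  by apply: cont_add; [exact: cont_dotv|apply: cont_opp; exact: cont_dotv].
have Ab : forall w, A w -> forall j, `|w ord0 j| <= 1 + B.
  move=> w [hB _] j.
  have h1 := coord_sq_le w j.
  have hB0 := sqnorm_ge0 wf.
  rewrite -real_normK ?num_real // in h1.
  have := normr_ge0 (w ord0 j).
  move: h1 hB; rewrite -/B; set a := `|w ord0 j|; move=> h1 hB ha.
  rewrite expr2 in h1; nra.
have [wm Am wmin] := @exists_min R s (fun w => sqnorm w) A (1 + B) wf Awf Acl Ab
  (@cont_sqnorm R _ s id (fun j => cont_coord j)).
have hLU : forall i j, (i \in S) && (c i == 1) -> (j \in S) && (c j == -1) ->
    1 - dotv wm (x i) <= -1 - dotv wm (x j).
  move=> i j hi hj.
  case: Am => _ /(_ (i, j)) /=.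
  move: hi hj => /andP [iS /eqP ci] /andP [jS /eqP cj].
  rewrite /P iS jS ci cj !eqxx /= mul1r; lra.
have [w0m [hL hU]] := @interval_lemma R 'I_r (fun i => (i \in S) && (c i == 1))
  (fun j => (j \in S) && (c j == -1)) (fun i => 1 - dotv wm (x i)) (fun j => -1 - dotv wm (x j))
  hLU.
exists wm, w0m; split.
  move=> i iS; case: (hc i) => ci.
    have := hL i; rewrite iS ci eqxx => /(_ isT); rewrite mul1r; lra.
  have := hU i; rewrite iS ci eqxx => /(_ isT); lra.
move=> w' w0' hw'.
case: (leP (sqnorm w') B) => hB.
  apply: wmin; split; first by rewrite subr_ge0.
  exact: pairP hw'.
case: Am => hBm _; lra.
Qed.

Lemma primal_exists (hc : forall i, c i = 1 \/ c i = -1) (hlam : 0 < lam) :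
  exists (w : 'rV[R]_s) (w0 : R), forall (w' : 'rV[R]_s) (w0' : R),
      primal_obj x c lam w w0 <= primal_obj x c lam w' w0'.
Proof.
have hS : forall S, exists p : 'rV[R]_s * R, (exists w w0, feasS S w w0) ->
    feasS S p.1 p.2 /\ forall w' w0', feasS S w' w0' -> sqnorm p.1 <= sqnorm w'.
  move=> S; case: (pselect (exists w w0, feasS S w w0)) => [h|h].
    by have [w [w0 [h1 h2]]] := per_S hc h; exists (w, w0).
  by exists (0, 0) => /h.
have [pm hpm] := choice hS.
pose F (S : {set 'I_r}) := `[< exists w w0, feasS S w w0 >].
pose val (S : {set 'I_r}) := 2^-1 * sqnorm (pm S).1 + lam * \sum_(i < r) (i \notin S)%:R.
have F0 : F finset.set0 by apply/asboolP; exists 0, 0 => i; rewrite inE.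
have [Ss FS hSs] := @fin_argmin R _ F val finset.set0 F0.
exists (pm Ss).1, (pm Ss).2 => w' w0'.
set S' := [set i | 1 <= c i * (dotv w' (x i) + w0')]%SET.
have feas' : feasS S' w' w0' by move=> i; rewrite inE.
have FS' : F S' by apply/asboolP; exists w', w0'.
have [hf hm] := hpm Ss (asboolP _ FS).
apply: (@le_trans _ _ (val Ss)).
  rewrite /primal_obj /val lerD2l; apply: ler_wpM2l; first exact: ltW.
  exact: viol_le hf.
apply: (le_trans (hSs S' FS')).
rewrite /primal_obj -/(viol w' w0') viol_eq -/S' /val lerD2r.
apply: ler_wpM2l; first by rewrite invr_ge0.
have [_ hm'] := hpm S' (asboolP _ FS').
exact: hm' feas'.
Qed.

End PartA.


Theorem mainTheorem8 (R : realType) (r s : nat) (x : 'I_r -> 'rV[R]_s)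
  (c : 'I_r -> R) (lam : R) (mu : 'I_r -> R)
  (hc : forall i, c i = 1 \/ c i = -1) (hlam : 0 < lam)
  (hmu : forall i, 0 < mu i) :
  (exists (w : 'rV[R]_s) (w0 : R), forall (w' : 'rV[R]_s) (w0' : R),
      primal_obj x c lam w w0 <= primal_obj x c lam w' w0')
  /\
  ((exists z : 'I_r -> R, dual_feasible c z /\
      forall z' : 'I_r -> R, dual_feasible c z' ->
        dual_obj x c mu z <= dual_obj x c mu z')
   <->
   (exists (w : 'rV[R]_s) (w0 : R), forall i, 1 <= c i * (dotv w (x i) + w0))).
Proof.
split; first exact: primal_exists hc hlam.
split; first exact: dual_min_sep hmu.
by move=> [w [w0 hw]]; exact: dual_exists hmu w w0 hw.
Qed.
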